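(* Let $\lambda \in P$ and $\lhd \in \mathrm{RO}(\lambda, \Delta^{+})$. Then the total order $<$ on $L := \mathrm{Inv}(\lambda)$ is an affine reflection order, i.e.: (1) if $\alpha^{\vee}, \beta^{\vee} \in L$ and $\alpha^{\vee}+\beta^{\vee}$ is a positive real affine coroot, then $\alpha^{\vee}+\beta^{\vee} \in L$ and either $\alpha^{\vee} < \alpha^{\vee}+\beta^{\vee} < \beta^{\vee}$ or $\beta^{\vee} < \alpha^{\vee}+\beta^{\vee} < \alpha^{\vee}$; (2) if $\alpha^{\vee}, \beta^{\vee}$ are positive real affine coroots with $\alpha^{\vee}+\beta^{\vee} \in L$, then either ($\alpha^{\vee} \in L$ and $\alpha^{\vee} < \alpha^{\vee}+\beta^{\vee}$) or ($\beta^{\vee} \in L$ and $\beta^{\vee} < \alpha^{\vee}+\beta^{\vee}$).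
   Context: Let $\mathfrak{g}$ be a finite-dimensional complex simple Lie algebra with root system $\Delta$, positive roots $\Delta^{+}$, weight lattice $P$ and pairing $\langle\cdot,\cdot\rangle$; $\alpha^\vee$ is the coroot of $\alpha$. For $\lambda\in P$, $\Delta^{+}(\lambda)_{>0}$, $\Delta^{+}(\lambda)_{=0}$, $\Delta^{+}(\lambda)_{<0}$ denote the sets of $\alpha \in \Delta^{+}$ with $\langle\lambda,\alpha^\vee\rangle$ respectively $>0$, $=0$, $<0$. A total order $\lhd$ on $\Delta^{+}$ is a reflection order if whenever $\alpha,\beta,\alpha+\beta\in\Delta^+$, either $\alpha\lhd\alpha+\beta\lhd\beta$ or $\beta\lhd\alpha+\beta\lhd\alpha$; $\mathrm{RO}(\lambda,\Delta^+)$ is the set of reflection orders $\lhd$ with $\alpha\lhd\beta\lhd\gamma$ for all $\alpha\in\Delta^+(\lambda)_{<0}$, $\beta\in\Delta^+(\lambda)_{=0}$, $\gamma\in\Delta^+(\lambda)_{>0}$. Affine coroots: let $\tilde\delta$ be a formal symbol; real affine coroots are $\gamma^{\vee}+k\tilde\delta$ ($\gamma\in\Delta$, $k\in\mathbb{Z}$); for $\beta^\vee=\gamma^\vee+k\tilde\delta$ set $\overline{\beta^\vee}:=\gamma^\vee$, $\overline{\beta}:=\gamma$, $\deg(\beta^\vee):=k$; $\beta^\vee$ is positive if $k>0$ or ($k=0$ and $\gamma\in\Delta^+$), negative otherwise. $t_\lambda(\gamma^\vee+k\tilde\delta)=\gamma^\vee+(k-\langle\lambda,\gamma^\vee\rangle)\tilde\delta$,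 and $\mathrm{Inv}(\lambda)$ is the set of positive real affine coroots $\beta^\vee$ with $t_\lambda(\beta^\vee)$ negative. For $\beta^\vee\in\mathrm{Inv}(\lambda)$ one has $\langle\lambda,\overline{\beta^\vee}\rangle>0$ and $\overline\beta\in\Delta^+(\lambda)_{>0}\sqcup(-\Delta^+(\lambda)_{<0})$; set $d(\beta^\vee):=\deg(\beta^\vee)/\langle\lambda,\overline{\beta^\vee}\rangle$. Define a total order $\prec$ on $\Delta^+(\lambda)_{>0}\sqcup(-\Delta^+(\lambda)_{<0})$: every element of $\Delta^+(\lambda)_{>0}$ precedes every element of $-\Delta^+(\lambda)_{<0}$; on $\Delta^+(\lambda)_{>0}$, $\gamma\prec\gamma'$ iff $\gamma\lhd\gamma'$; on $-\Delta^+(\lambda)_{<0}$, $-\alpha\prec-\alpha'$ iff $\alpha\lhd\alpha'$. The total order $<$ on $\mathrm{Inv}(\lambda)$ is: $\beta^\vee<\beta'^\vee$ iff $d(\beta^\vee)<d(\beta'^\vee)$, or $d(\beta^\vee)=d(\beta'^\vee)$ and $\overline{\beta'}\prec\overline{\beta}$. *)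

(* Defs.v *)
From HB Require Import structures.
From mathcomp Require Import all_boot all_order all_algebra.
Set Implicit Arguments. Unset Strict Implicit. Unset Printing Implicit Defensive.
Import Order.TTheory GRing.Theory Num.Theory.
Local Open Scope ring_scope.

Section RootSystems.
Variables (R : realFieldType) (n : nat).
Notation V := 'rV[R]_n.

Definition dot (u v : V) : R := \sum_(i < n) u 0 i * v 0 i.

Definition coroot (a : V) : V := (2 / dot a a) *: a.

Definition pairing (lam a : V) : R := dot lam (coroot a).

Definition is_integer (x : R) : Prop := exists z : int, x = z%:~R.

Definition is_irreducible_reduced_root_system (D : seq V) : Prop :=
  D != [::] /\
  (0 : V) \notin D /\
  (span D == fullv)%VS /\
  (forall a b, a \in D -> b \in D -> b - pairing b a *: a \in D) /\
  (forall a b, a \in D -> b \in D -> is_integer (pairing b a)) /\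
  (forall a (c : R), a \in D -> c *: a \in D -> c = 1 \/ c = -1) /\
  (forall P : pred V,
     (forall a b, a \in D -> b \in D -> P a -> ~~ P b -> dot a b = 0) ->
     (forall a, a \in D -> P a) \/ (forall a, a \in D -> ~~ P a)).

Definition is_positive_system (D : seq V) (Dp : pred V) : Prop :=
  exists v : V, (forall a, a \in D -> dot v a != 0) /\
    (forall a, Dp a <-> (a \in D /\ 0 < dot v a)).

Definition in_weight_lattice (D : seq V) (lam : V) : Prop :=
  forall a, a \in D -> is_integer (pairing lam a).

Definition is_reflection_order (Dp : pred V) (ltr : rel V) : Prop :=
  [/\ (forall a, Dp a -> ~~ ltr a a),
      (forall a b c, Dp a -> Dp b -> Dp c -> ltr a b -> ltr b c -> ltr a c),
      (forall a b, Dp a -> Dp b -> a != b -> ltr a b || ltr b a)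
    & (forall a b, Dp a -> Dp b -> Dp (a + b) ->
         (ltr a (a + b) && ltr (a + b) b) || (ltr b (a + b) && ltr (a + b) a))].

Definition in_RO (Dp : pred V) (lam : V) (ltr : rel V) : Prop :=
  is_reflection_order Dp ltr /\
  (forall a b, Dp a -> Dp b ->
     ((pairing lam a < 0) && (pairing lam b == 0) -> ltr a b) /\
     ((pairing lam a == 0) && (0 < pairing lam b) -> ltr a b) /\
     ((pairing lam a < 0) && (0 < pairing lam b) -> ltr a b)).

(* Affine coroots gamma^vee + k delta~ are represented by the pair
   (gamma^vee, k) : V * int (the first component is the coroot vector). *)
Definition acoroot := (V * int)%type.

Definition aadd (x y : acoroot) : acoroot := (x.1 + y.1, x.2 + y.2).

Definition is_real_acoroot (D : seq V) (x : acoroot) : Prop :=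
  exists2 g, g \in D & x.1 = coroot g.

(* overline{beta}: the root gamma with gamma^vee = x.1, i.e. 2 c / (c,c) *)
Definition abar (x : acoroot) : V := (2 / dot x.1 x.1) *: x.1.

Definition is_pos_acoroot (D : seq V) (Dp : pred V) (x : acoroot) : Prop :=
  exists2 g, g \in D &
    x.1 = coroot g /\ ((0 < x.2)%R \/ (x.2 = 0 /\ Dp g)).

(* Inv(lam): positive real affine coroots beta with t_lam(beta) negative,
   i.e. not positive (the image is again a real affine coroot). *)
Definition in_Inv (D : seq V) (Dp : pred V) (lam : V) (x : acoroot) : Prop :=
  is_pos_acoroot D Dp x /\
  ~ (exists2 g, g \in D &
       x.1 = coroot g /\
       (0 < x.2%:~R - dot lam x.1 \/ (x.2%:~R - dot lam x.1 = 0 /\ Dp g))).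

Definition dInv (lam : V) (x : acoroot) : R := x.2%:~R / dot lam x.1.

(* the order prec on Delta^+(lam)_{>0} \sqcup (-Delta^+(lam)_{<0}) *)
Definition precI (Dp : pred V) (ltr : rel V) (g g' : V) : bool :=
  if Dp g then (if Dp g' then ltr g g' else true)
  else (if Dp g' then false else ltr (- g) (- g')).

Definition ltInv (Dp : pred V) (ltr : rel V) (lam : V) (x y : acoroot) : Prop :=
  dInv lam x < dInv lam y \/
  (dInv lam x = dInv lam y /\ precI Dp ltr (abar y) (abar x)).

End RootSystems.

(* Main.v *)
Require Import Defs.
From HB Require Import structures.
From mathcomp Require Import all_boot all_order all_algebra.
From mathcomp Require Import zify ring lra.
Set Implicit Arguments. Unset Strict Implicit. Unset Printing Implicit Defensive.
Import Order.TTheory GRing.Theory Num.Theory.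
Local Open Scope ring_scope.

Lemma dotC (R : realFieldType) n (u v : 'rV[R]_n) : dot u v = dot v u.
Proof. by apply: eq_bigr => i _; rewrite mulrC. Qed.

Lemma dotDl (R : realFieldType) n (u v w : 'rV[R]_n) : dot (u + v) w = dot u w + dot v w.
Proof. by rewrite /dot -big_split; apply: eq_bigr => i _; rewrite mxE mulrDl. Qed.

Lemma dotZl (R : realFieldType) n (c : R) (u w : 'rV[R]_n) : dot (c *: u) w = c * dot u w.
Proof. by rewrite /dot mulr_sumr; apply: eq_bigr => i _; rewrite mxE mulrA. Qed.

Lemma dotNl (R : realFieldType) n (u w : 'rV[R]_n) : dot (- u) w = - dot u w.
Proof. by rewrite -scaleN1r dotZl mulN1r. Qed.

Lemma dotBl (R : realFieldType) n (u v w : 'rV[R]_n) : dot (u - v) w = dot u w - dot v w.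
Proof. by rewrite dotDl dotNl. Qed.

Lemma dotDr (R : realFieldType) n (u v w : 'rV[R]_n) : dot w (u + v) = dot w u + dot w v.
Proof. by rewrite dotC dotDl !(dotC w). Qed.

Lemma dotZr (R : realFieldType) n (c : R) (u w : 'rV[R]_n) : dot w (c *: u) = c * dot w u.
Proof. by rewrite dotC dotZl dotC. Qed.

Lemma dotNr (R : realFieldType) n (u w : 'rV[R]_n) : dot w (- u) = - dot w u.
Proof. by rewrite dotC dotNl dotC. Qed.

Lemma dot_ge0 (R : realFieldType) n (u : 'rV[R]_n) : 0 <= dot u u.
Proof. by apply: sumr_ge0 => i _; rewrite -expr2 sqr_ge0. Qed.

Lemma dot_eq0 (R : realFieldType) n (u : 'rV[R]_n) : dot u u = 0 -> u = 0.
Proof.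
move=> /eqP; rewrite /dot psumr_eq0 => [/allP H|i _]; last by rewrite -expr2 sqr_ge0.
apply/rowP => j; rewrite mxE.
have := H j (mem_index_enum j); rewrite /= mulf_eq0 orbb.
by move/eqP.
Qed.

Lemma dot_gt0 (R : realFieldType) n (u : 'rV[R]_n) : u != 0 -> 0 < dot u u.
Proof.
move=> Hu; rewrite lt0r dot_ge0 andbT; apply/eqP => /dot_eq0 H.
by rewrite H eqxx in Hu.
Qed.

Lemma dot_coroot (R : realFieldType) n (x g : 'rV[R]_n) :
  dot x (coroot g) = 2 * dot x g / dot g g.
Proof. by rewrite /coroot dotZr mulrAC. Qed.

Lemma dotBr (R : realFieldType) n (u v w : 'rV[R]_n) : dot w (u - v) = dot w u - dot w v.
Proof. by rewrite dotDr dotNr. Qed.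

Lemma pairing_self (R : realFieldType) n (g : 'rV[R]_n) : g != 0 -> pairing g g = 2.
Proof.
move=> Hg; rewrite /pairing dot_coroot -mulrA divff ?mulr1 //.
by rewrite gt_eqF // dot_gt0.
Qed.

Lemma pairingDl (R : realFieldType) n (x y g : 'rV[R]_n) :
  pairing (x + y) g = pairing x g + pairing y g.
Proof. by rewrite /pairing dotDl. Qed.

Lemma pairingZl (R : realFieldType) n (c : R) (x g : 'rV[R]_n) :
  pairing (c *: x) g = c * pairing x g.
Proof. by rewrite /pairing dotZl. Qed.

Lemma pairingNl (R : realFieldType) n (x g : 'rV[R]_n) :
  pairing (- x) g = - pairing x g.
Proof. by rewrite /pairing dotNl. Qed.

Lemma dotNN (R : realFieldType) n (g : 'rV[R]_n) : dot (-g) (-g) = dot g g.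
Proof. by rewrite dotNl dotNr opprK. Qed.

Lemma corootN (R : realFieldType) n (g : 'rV[R]_n) : coroot (- g) = - coroot g.
Proof. by rewrite /coroot dotNN scalerN. Qed.

Lemma coroot_scale_gt0 (R : realFieldType) n (g : 'rV[R]_n) : g != 0 -> 0 < 2 / dot g g.
Proof. by move=> Hg; rewrite divr_gt0 // dot_gt0. Qed.

Lemma coroot_neq0 (R : realFieldType) n (g : 'rV[R]_n) : g != 0 -> coroot g != 0.
Proof.
move=> Hg; rewrite /coroot scaler_eq0 negb_or Hg andbT.
by rewrite gt_eqF // coroot_scale_gt0.
Qed.

Lemma corootK (R : realFieldType) n (g : 'rV[R]_n) : g != 0 -> coroot (coroot g) = g.
Proof.
move=> Hg; have Hgg : dot g g != 0 by rewrite gt_eqF // dot_gt0.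
rewrite {1}/coroot /coroot dotZl dotZr scalerA.
rewrite -[RHS]scale1r; congr (_ *: _).
by field; rewrite Hgg.
Qed.

Lemma coroot_inj (R : realFieldType) n (g h : 'rV[R]_n) :
  g != 0 -> h != 0 -> coroot g = coroot h -> g = h.
Proof. by move=> Hg Hh E; rewrite -(corootK Hg) E corootK. Qed.

Lemma dot_coroot_sign (R : realFieldType) n (v g : 'rV[R]_n) :
  g != 0 -> (0 < dot v (coroot g)) = (0 < dot v g).
Proof. by move=> Hg; rewrite /coroot dotZr pmulr_rgt0 // coroot_scale_gt0. Qed.

Lemma dot_coroot_signN (R : realFieldType) n (v g : 'rV[R]_n) :
  g != 0 -> (dot v (coroot g) < 0) = (dot v g < 0).
Proof. by move=> Hg; rewrite /coroot dotZr pmulr_rlt0 // coroot_scale_gt0. Qed.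

Lemma cs_strict (R : realFieldType) n (x y : 'rV[R]_n) :
  x != 0 -> (forall c : R, y != c *: x) -> dot x y ^+ 2 < dot x x * dot y y.
Proof.
move=> Hx Hy; set c := dot x y / dot x x.
have Hxx : 0 < dot x x by exact: dot_gt0.
have Hz : y - c *: x != 0 by rewrite subr_eq0 Hy.
have := dot_gt0 Hz.
rewrite dotBl !dotBr !dotZl !dotZr (dotC y x).
have -> : dot y y - c * dot x y - (c * dot x y - c * (c * dot x x)) =
          (dot x x * dot y y - dot x y ^+ 2) / dot x x.
  by rewrite /c; field; rewrite gt_eqF.
by rewrite pmulr_lgt0 ?invr_gt0 // subr_gt0.
Qed.

Lemma pairing_prod (R : realFieldType) n (x y : 'rV[R]_n) :
  x != 0 -> y != 0 ->
  pairing x y * pairing y x = 4 * dot x y ^+ 2 / (dot x x * dot y y).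
Proof.
move=> Hx Hy; rewrite /pairing !dot_coroot (dotC y x).
by field; rewrite !gt_eqF ?dot_gt0.
Qed.

Lemma pairing_prod_ge0 (R : realFieldType) n (x y : 'rV[R]_n) :
  x != 0 -> y != 0 -> 0 <= pairing x y * pairing y x.
Proof.
move=> Hx Hy; rewrite pairing_prod //.
apply: divr_ge0; apply: mulr_ge0; rewrite ?sqr_ge0 ?dot_ge0 //.
Qed.

Lemma pairing_prod_lt4 (R : realFieldType) n (x y : 'rV[R]_n) :
  x != 0 -> y != 0 -> (forall c : R, y != c *: x) -> pairing x y * pairing y x < 4.
Proof.
move=> Hx Hy Hc; rewrite pairing_prod //.
have Hp : 0 < dot x x * dot y y by rewrite mulr_gt0 ?dot_gt0.
rewrite ltr_pdivrMr // ltr_pM2l //; exact: cs_strict.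
Qed.

Lemma root_neq0 (R : realFieldType) n (D : seq 'rV[R]_n) a :
  is_irreducible_reduced_root_system D -> a \in D -> a != 0.
Proof. by case=> _ [H0 _] Ha; apply: contraNneq H0 => <-. Qed.

Lemma root_refl (R : realFieldType) n (D : seq 'rV[R]_n) a b :
  is_irreducible_reduced_root_system D -> a \in D -> b \in D ->
  b - pairing b a *: a \in D.
Proof. by case=> _ [_ [_ [H _]]]; apply: H. Qed.

Lemma root_int (R : realFieldType) n (D : seq 'rV[R]_n) a b :
  is_irreducible_reduced_root_system D -> a \in D -> b \in D ->
  is_integer (pairing b a).
Proof. by case=> _ [_ [_ [_ [H _]]]]; apply: H. Qed.

Lemma root_red (R : realFieldType) n (D : seq 'rV[R]_n) a (c : R) :
  is_irreducible_reduced_root_system D -> a \in D -> c *: a \in D ->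
  c = 1 \/ c = -1.
Proof. by case=> _ [_ [_ [_ [_ [H _]]]]]; apply: H. Qed.

Lemma root_opp (R : realFieldType) n (D : seq 'rV[R]_n) a :
  is_irreducible_reduced_root_system D -> a \in D -> - a \in D.
Proof.
move=> HD Ha; have := root_refl HD Ha Ha.
rewrite pairing_self ?(root_neq0 HD) //.
by have -> : a - 2 *: a = - a by rewrite scaler_nat mulr2n opprD addrA subrr add0r.
Qed.

Lemma root_nonprop (R : realFieldType) n (D : seq 'rV[R]_n) a b :
  is_irreducible_reduced_root_system D -> a \in D -> b \in D ->
  b != a -> b != - a -> forall c : R, b != c *: a.
Proof.
move=> HD Ha Hb H1 H2 c; apply/eqP => E.
have Hc : c *: a \in D by rewrite -E.
case: (root_red HD Ha Hc) => Ec.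
  by rewrite E Ec scale1r eqxx in H1.
by rewrite E Ec scaleN1r eqxx in H2.
Qed.

Lemma root_pprod (R : realFieldType) n (D : seq 'rV[R]_n) a b :
  is_irreducible_reduced_root_system D -> a \in D -> b \in D ->
  b != a -> b != - a -> pairing a b * pairing b a < 4.
Proof.
move=> HD Ha Hb H1 H2; apply: pairing_prod_lt4.
- exact: root_neq0 HD Ha.
- exact: root_neq0 HD Hb.
- exact: (root_nonprop HD Ha Hb H1 H2).
Qed.

Lemma Dp_D (R : realFieldType) n (D : seq 'rV[R]_n) Dp a :
  is_positive_system D Dp -> Dp a -> a \in D.
Proof. by case=> v [_ H] /H []. Qed.

Lemma DpN (R : realFieldType) n (D : seq 'rV[R]_n) Dp a :
  is_positive_system D Dp -> Dp a -> ~~ Dp (- a).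
Proof.
case=> v [_ H] /H [_ Ha]; apply/negP => /H [_].
by rewrite dotNr oppr_gt0 ltNge (ltW Ha).
Qed.

Lemma Dp_or (R : realFieldType) n (D : seq 'rV[R]_n) Dp a :
  is_irreducible_reduced_root_system D ->
  is_positive_system D Dp -> a \in D -> ~~ Dp a -> Dp (- a).
Proof.
move=> HD [v [Hv H]] Ha Hn; apply/H; split; first exact: root_opp.
rewrite dotNr oppr_gt0 lt_neqAle (Hv _ Ha) /=.
rewrite leNgt; apply: contra Hn => Hp; exact/H.
Qed.

Lemma Dp_add (R : realFieldType) n (D : seq 'rV[R]_n) Dp a b :
  is_positive_system D Dp -> Dp a -> Dp b -> a + b \in D -> Dp (a + b).
Proof.
case=> v [_ H] /H [_ Ha] /H [_ Hb] Hab; apply/H; split=> //.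
by rewrite dotDr addr_gt0.
Qed.

Lemma Dp_sum (R : realFieldType) n (D : seq 'rV[R]_n) Dp a b h :
  is_irreducible_reduced_root_system D -> is_positive_system D Dp ->
  h \in D -> coroot a + coroot b = coroot h -> Dp a -> Dp b -> Dp h.
Proof.
move=> HD HP Hh E Ha Hb; have HPc := HP; case: HPc => v [_ H].
have [Ha' Hav] := (H a).1 Ha; have [Hb' Hbv] := (H b).1 Hb.
apply/H; split=> //; rewrite -(dot_coroot_sign v (root_neq0 HD Hh)) -E dotDr.
by rewrite addr_gt0 // dot_coroot_sign // (root_neq0 HD).
Qed.

Lemma nDp_sum (R : realFieldType) n (D : seq 'rV[R]_n) Dp a b h :
  is_irreducible_reduced_root_system D -> is_positive_system D Dp ->
  a \in D -> b \in D -> h \in D -> coroot a + coroot b = coroot h ->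
  ~~ Dp a -> ~~ Dp b -> ~~ Dp h.
Proof.
move=> HD HP Ha Hb Hh E na nb.
have Ha' := Dp_or HD HP Ha na; have Hb' := Dp_or HD HP Hb nb.
have E' : coroot (-a) + coroot (-b) = coroot (-h) by rewrite !corootN -opprD E.
have := Dp_sum HD HP (root_opp HD Hh) E' Ha' Hb'.
by apply: contraL => Hh'; rewrite (DpN HP Hh').
Qed.

Definition betw (T : Type) (r : rel T) a b c := (r a b && r b c) || (r c b && r b a).

Ltac bsat tr irr :=
  repeat match goal with
  | H1 : is_true (?r ?a ?b), H2 : is_true (?r ?b ?c) |- _ =>
      lazymatch goal with
      | _ : is_true (r a c) |- _ => fail
      | _ => have := tr a b c ltac:(assumption) ltac:(assumption) ltac:(assumption) H1 H2; move=> ?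
      end
  end;
  try (match goal with H : is_true (?r ?a ?a) |- _ =>
         exfalso; move: (irr a ltac:(assumption)); rewrite H; done end).

Ltac bsolve tr irr :=
  rewrite /betw; repeat (case/orP || case/andP || move/andP=> [? ?] || move=> ?);
  bsat tr irr;
  try (apply/orP; first [left; apply/andP; split; assumption
                         | right; apply/andP; split; assumption]).


Lemma betwC (T : Type) (r : rel T) a b c : betw r a b c = betw r c b a.
Proof. by rewrite /betw orbC. Qed.

Lemma betw_L4 (T : Type) (r : rel T) (P : pred T)
  (irr : forall a, P a -> ~~ r a a)
  (tr : forall a b c, P a -> P b -> P c -> r a b -> r b c -> r a c) a b c d :
  P a -> P b -> P c -> P d ->
  betw r a b d -> betw r b c d -> betw r a b c.
Proof. move=> Pa Pb Pc Pd; bsolve tr irr. Qed.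

Lemma betw_LB (T : Type) (r : rel T) (P : pred T)
  (irr : forall a, P a -> ~~ r a a)
  (tr : forall a b c, P a -> P b -> P c -> r a b -> r b c -> r a c) a b c d :
  P a -> P b -> P c -> P d ->
  betw r a b d -> betw r b c d -> betw r a c d.
Proof. move=> Pa Pb Pc Pd; bsolve tr irr. Qed.

Lemma betw_L5 (T : Type) (r : rel T) (P : pred T)
  (irr : forall a, P a -> ~~ r a a)
  (tr : forall a b c, P a -> P b -> P c -> r a b -> r b c -> r a c) x y al be ga :
  P x -> P y -> P al -> P be -> P ga ->
  betw r x ga y -> betw r x al ga -> betw r ga be y -> betw r al ga be.
Proof. move=> Px Py Pa Pb Pg; bsolve tr irr. Qed.

Lemma betw_L6 (T : Type) (r : rel T) (P : pred T)
  (irr : forall a, P a -> ~~ r a a)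
  (tr : forall a b c, P a -> P b -> P c -> r a b -> r b c -> r a c) x y al be ga :
  P x -> P y -> P al -> P be -> P ga ->
  betw r ga x y -> betw r ga al x -> betw r be ga y -> betw r al ga be.
Proof. move=> Px Py Pa Pb Pg; bsolve tr irr. Qed.

Lemma int_cases (u w n1 n2 : int) : u + w = 2 -> 0 <= u * (2 + n1) <= 3 -> 0 <= w * (2+n2) <= 3 ->
  0 <= n1 * n2 <= 3 -> (u == 0) = (n1 == -2) -> (w == 0) = (n2 == -2) -> (n1 == 0) = (n2 == 0) ->
  u <= 1 ->
  (u = 1 /\ w = 1 /\ n1 = -1 /\ n2 = -1) \/ (u = 1 /\ w = 1 /\ n1 = 0 /\ n2 = 0) \/
  (u = 1 /\ w = 1 /\ n1 = 1 /\ n2 = 1) \/ (u = 0 /\ w = 2 /\ n1 = -2 /\ n2 = -1) \/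
  (u = -1 /\ w = 3 /\ n1 = -3 /\ n2 = -1).
Proof.
move=> H1 /andP[H2 H3] /andP[H4 H5] /andP[H6 H7] E1 E2 E3 Hu.
have E1a : n1 = -2 -> u = 0 by move=> E; apply/eqP; rewrite E1 E.
have E1b : u = 0 -> n1 = -2 by move=> E; apply/eqP; rewrite -E1 E.
have E2a : n2 = -2 -> w = 0 by move=> E; apply/eqP; rewrite E2 E.
have E2b : w = 0 -> n2 = -2 by move=> E; apply/eqP; rewrite -E2 E.
have E3a : n2 = 0 -> n1 = 0 by move=> E; apply/eqP; rewrite E3 E.
have E3b : n1 = 0 -> n2 = 0 by move=> E; apply/eqP; rewrite -E3 E.
clear E1 E2 E3.
have Hw : 1 <= w by lia.
have Hn2 : 1 <= 2 + n2.
  have : n2 <> -2 by move=> /E2a; lia.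
  nia.
have Hw3 : w <= 3 by nia.
have : (u = -1) \/ (u = 0) \/ (u = 1) by lia.
case=> [Eu|[Eu|Eu]]; subst u.
- have Ew : w = 3 by lia.
  subst w; have En2 : n2 = -1 by lia.
  subst n2; right; right; right; right; lia.
- have Ew : w = 2 by lia.
  subst w; have En2 : n2 = -1 by lia.
  subst n2; right; right; right; left; lia.
- have Ew : w = 1 by lia.
  subst w.
  have : n2 = -1 \/ n2 = 0 \/ n2 = 1 by lia.
  have : n1 = -1 \/ n1 = 0 \/ n1 = 1 by lia.
  case=> [E5|[E5|E5]] [E4|[E4|E4]]; subst n1 n2; lia.
Qed.

Lemma num_facts (R : realFieldType) :
  [/\ (2:R) <> 1, (2:R) <> -1, (-2:R) <> 1 & (-2:R) <> -1].
Proof. by split=> H; lra. Qed.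

Lemma coroot_scale (R : realFieldType) n (g : 'rV[R]_n) (c : R) :
  c != 0 -> g != 0 -> coroot (c *: g) = c^-1 *: coroot g.
Proof.
move=> Hc Hg; have Hgg : dot g g != 0 by rewrite gt_eqF // dot_gt0.
rewrite /coroot dotZl dotZr !scalerA; congr (_ *: _).
by field; rewrite Hc Hgg.
Qed.

Lemma coroot_prop (R : realFieldType) n (D : seq 'rV[R]_n) x y (c : R) :
  is_irreducible_reduced_root_system D -> x \in D -> y \in D ->
  coroot y = c *: coroot x -> c = 1 \/ c = -1.
Proof.
move=> HD Hx Hy E.
have Hx0 := root_neq0 HD Hx; have Hy0 := root_neq0 HD Hy.
have Hc : c != 0.
  apply/eqP => Ec; move: E; rewrite Ec scale0r => /eqP.
  by rewrite (negbTE (coroot_neq0 Hy0)).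
have Ey : y = c^-1 *: x.
  by rewrite -(corootK Hy0) E coroot_scale ?coroot_neq0 // corootK.
have Hcx : c^-1 *: x \in D by rewrite -Ey.
case: (root_red HD Hx Hcx) => Ec.
  by left; rewrite -[c]invrK Ec invr1.
by right; rewrite -[c]invrK Ec invrN1.
Qed.

Lemma core_distinct (R : realFieldType) n (D : seq 'rV[R]_n) al be ga :
  is_irreducible_reduced_root_system D -> al \in D -> be \in D -> ga \in D ->
  coroot al + coroot be = coroot ga ->
  [/\ be != al, be != - al, al != ga & al != - ga].
Proof.
move=> HD Ha Hb Hg E.
have Ha0 := root_neq0 HD Ha; have Hb0 := root_neq0 HD Hb; have Hg0 := root_neq0 HD Hg.
split; apply/eqP => Ex.
- move: E; rewrite Ex => E.
  have E2 : coroot ga = 2 *: coroot al by rewrite -E scaler_nat mulr2n.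
  by case: (num_facts R) => ? ? _ _; case: (coroot_prop HD Ha Hg E2).
- move: E; rewrite Ex corootN addrN => /esym /eqP.
  by rewrite (negbTE (coroot_neq0 Hg0)).
- move: E; rewrite Ex => /eqP; rewrite addrC -subr_eq0 addrK => /eqP E.
  by move: (coroot_neq0 Hb0); rewrite E eqxx.
- have Eg : ga = - al by rewrite Ex opprK.
  have E' : coroot be = (-2) *: coroot al.
    apply: (addrI (coroot al)); rewrite E Eg corootN.
    by rewrite scaleNr scaler_nat mulr2n opprD addrA subrr add0r.
  by case: (num_facts R) => _ _ ? ?; case: (coroot_prop HD Ha Hb E').
Qed.

Lemma pairing_eq0 (R : realFieldType) n (x g : 'rV[R]_n) :
  g != 0 -> (pairing x g == 0) = (dot x g == 0).
Proof.
move=> Hg; rewrite /pairing dot_coroot mulf_eq0 invr_eq0 (gt_eqF (dot_gt0 Hg)) orbF.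
by rewrite mulf_eq0 pnatr_eq0.
Qed.

Lemma int_of_real (R : realFieldType) (x : R) (z : int) (k : int) :
  x = z%:~R -> x = k%:~R -> z = k.
Proof. by move=> -> /eqP; rewrite eqr_int => /eqP. Qed.

Lemma int_bounds (R : realFieldType) (x : R) (z : int) :
  x = z%:~R -> 0 <= x -> x < 4 -> (0 <= z <= 3)%R.
Proof.
move=> -> H0 H4; have H0' : (0 <= z)%R by rewrite -(ler_int R).
have H4' : (z < 4)%R by rewrite -(ltr_int R).
apply/andP; split=> //; lia.
Qed.

Lemma int_eqv (R : realFieldType) (x y : R) (z1 z2 : int) (k1 k2 : int) :
  x = z1%:~R -> y = z2%:~R -> (x == k1%:~R) = (y == k2%:~R) -> (z1 == k1) = (z2 == k2).
Proof. by move=> -> ->; rewrite !eqr_int. Qed.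

Ltac vec Ega :=
  apply/rowP => j; have := congr1 (fun M : matrix _ 1 _ => M 0 j) Ega; rewrite !mxE => ->.

Lemma core_aux (R : realFieldType) n (D : seq 'rV[R]_n) Dp ltr al be ga :
  is_irreducible_reduced_root_system D -> is_positive_system D Dp ->
  is_reflection_order Dp ltr -> Dp al -> Dp be -> Dp ga ->
  coroot al + coroot be = coroot ga -> pairing ga al <= 1 -> betw ltr al ga be.
Proof.
move=> HD HP [irr tr _ sum] Pa Pb Pg E Hu.
have Ha := Dp_D HP Pa; have Hb := Dp_D HP Pb; have Hg := Dp_D HP Pg.
have Ha0 := root_neq0 HD Ha; have Hb0 := root_neq0 HD Hb; have Hg0 := root_neq0 HD Hg.
have [d1 d2 d3 d4] := core_distinct HD Ha Hb Hg E.
have E' : coroot be + coroot al = coroot ga by rewrite addrC.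
have [d5 d6 d7 d8] := core_distinct HD Hb Ha Hg E'.
have A0 : 0 < dot al al := dot_gt0 Ha0.
have B0 : 0 < dot be be := dot_gt0 Hb0.
have C0 : 0 < dot ga ga := dot_gt0 Hg0.
set a := dot ga ga / dot al al; set b := dot ga ga / dot be be.
have a0 : 0 < a by rewrite divr_gt0.
have b0 : 0 < b by rewrite divr_gt0.
have Ega : ga = a *: al + b *: be.
  have {1}-> : ga = (dot ga ga / 2) *: coroot ga.
    by rewrite /coroot scalerA -[LHS]scale1r; congr (_ *: _); field; rewrite gt_eqF.
  rewrite -E scalerDr /coroot !scalerA /a /b; congr (_ *: _ + _ *: _); field.
    by rewrite gt_eqF.
  by rewrite gt_eqF.
have P_aa : pairing al al = 2 := pairing_self Ha0.
have P_bb : pairing be be = 2 := pairing_self Hb0.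
have P_ag : pairing al ga = 2 + pairing al be.
  by rewrite /pairing -[coroot ga]E dotDr -/(pairing al al) P_aa.
have P_bg : pairing be ga = 2 + pairing be al.
  by rewrite /pairing -[coroot ga]E dotDr -/(pairing be be) P_bb addrC.
have Huw : pairing ga al + pairing ga be = 2.
  by rewrite /pairing -dotDr E; exact: pairing_self Hg0.
have Hq : a * pairing al be = b * pairing be al.
  rewrite /pairing !dot_coroot (dotC be al) /a /b; field.
  by rewrite !gt_eqF.
have Hu' : pairing ga al = a * (2 + pairing al be).
  by rewrite {1}Ega pairingDl !pairingZl P_aa -Hq -mulrDr.
have Hw' : pairing ga be = b * (2 + pairing be al).
  by rewrite {1}Ega pairingDl !pairingZl P_bb Hq -mulrDr addrC.
case: (root_int HD Hb Ha) => zn1 En1.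
case: (root_int HD Ha Hb) => zn2 En2.
case: (root_int HD Ha Hg) => zu Eu.
case: (root_int HD Hb Hg) => zw Ew.
have I1 : zu + zw = 2.
  by apply: (@int_of_real R (pairing ga al + pairing ga be)); rewrite ?intrD -?Eu -?Ew.
have I2 : (0 <= zu * (2 + zn1) <= 3)%R.
  apply: (@int_bounds R (pairing ga al * pairing al ga)).
  - by rewrite Eu P_ag En1 intrM intrD.
  - exact: pairing_prod_ge0.
  - exact: root_pprod HD Hg Ha d3 d4.
have I3 : (0 <= zw * (2 + zn2) <= 3)%R.
  apply: (@int_bounds R (pairing ga be * pairing be ga)).
  - by rewrite Ew P_bg En2 intrM intrD.
  - exact: pairing_prod_ge0.
  - exact: root_pprod HD Hg Hb d7 d8.
have I4 : (0 <= zn1 * zn2 <= 3)%R.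
  apply: (@int_bounds R (pairing al be * pairing be al)).
  - by rewrite En1 En2 intrM.
  - exact: pairing_prod_ge0.
  - exact: root_pprod HD Ha Hb d1 d2.
have I5 : (zu == 0) = (zn1 == -2).
  apply: (int_eqv Eu En1); rewrite Hu' mulf_eq0 (gt_eqF a0) /= rmorphN /=.
  by rewrite addrC addr_eq0.
have I6 : (zw == 0) = (zn2 == -2).
  apply: (int_eqv Ew En2); rewrite Hw' mulf_eq0 (gt_eqF b0) /= rmorphN /=.
  by rewrite addrC addr_eq0.
have I7 : (zn1 == 0) = (zn2 == 0).
  apply: (int_eqv En1 En2); rewrite /= !pairing_eq0 //.
  by rewrite dotC.
have I8 : (zu <= 1)%R by rewrite -(ler_int R) -Eu.
have S : forall x y z, Dp x -> Dp y -> x + y = z -> Dp z -> betw ltr x z y.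
  by move=> x y z Px Py Exy Pz; rewrite -Exy; apply: sum => //; rewrite Exy.
have := int_cases I1 I2 I3 I4 I5 I6 I7 I8.
case=> [[U [W [N1 N2]]]|[[U [W [N1 N2]]]|[[U [W [N1 N2]]]|[[U [W [N1 N2]]]|[U [W [N1 N2]]]]]]].
- (* gamma = alpha + beta *)
  have vu : pairing ga al = 1 by rewrite Eu U.
  have vw : pairing ga be = 1 by rewrite Ew W.
  have v1 : pairing al be = -1 by rewrite En1 N1 rmorphN.
  have v2 : pairing be al = -1 by rewrite En2 N2 rmorphN.
  have Ea : a = 1 by move: Hu'; rewrite vu v1; lra.
  have Eb : b = 1 by move: Hw'; rewrite vw v2; lra.
  apply: S => //; vec Ega; rewrite Ea Eb; lra.
- (* gamma = (alpha + beta)/2 *)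
  have vu : pairing ga al = 1 by rewrite Eu U.
  have vw : pairing ga be = 1 by rewrite Ew W.
  have v1 : pairing al be = 0 by rewrite En1 N1.
  have v2 : pairing be al = 0 by rewrite En2 N2.
  have Ea : a = 2^-1 by move: Hu'; rewrite vu v1; lra.
  have Eb : b = 2^-1 by move: Hw'; rewrite vw v2; lra.
  have Hd : ga - al \in D by have := root_refl HD Ha Hg; rewrite vu scale1r.
  case: (boolP (Dp (ga - al))) => Pd.
  + have H1 : betw ltr al ga (ga - al) by apply: S => //; rewrite addrC subrK.
    have H2 : betw ltr ga be (ga - al) by apply: S => //; vec Ega; rewrite Ea Eb; lra.
    exact: (betw_L4 irr tr Pa Pg Pb Pd H1 H2).
  + have Pd' := Dp_or HD HP Hd Pd.
    have H1 : betw ltr ga al (-(ga - al)) by apply: S => //; rewrite opprB addrC subrK.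
    have H2 : betw ltr be ga (-(ga - al)) by apply: S => //; vec Ega; rewrite Ea Eb; lra.
    rewrite betwC; exact: (betw_L4 irr tr Pb Pg Pa Pd' H2 H1).
- (* gamma = (alpha + beta)/3 *)
  have vu : pairing ga al = 1 by rewrite Eu U.
  have vw : pairing ga be = 1 by rewrite Ew W.
  have v1 : pairing al be = 1 by rewrite En1 N1.
  have v2 : pairing be al = 1 by rewrite En2 N2.
  have Ea : a = 3^-1 by move: Hu'; rewrite vu v1; lra.
  have Eb : b = 3^-1 by move: Hw'; rewrite vw v2; lra.
  have Hx : al - ga \in D.
    by have := root_opp HD (root_refl HD Ha Hg); rewrite vu scale1r opprB.
  have Hy : be - ga \in D.
    by have := root_opp HD (root_refl HD Hb Hg); rewrite vw scale1r opprB.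
  case: (boolP (Dp (al - ga))) => Px; case: (boolP (Dp (be - ga))) => Py.
  + have H1 : betw ltr (al - ga) ga (be - ga).
      by apply: S => //; vec Ega; rewrite Ea Eb; lra.
    have H2 : betw ltr ga al (al - ga) by apply: S => //; rewrite addrC subrK.
    have H3 : betw ltr ga be (be - ga) by apply: S => //; rewrite addrC subrK.
    by apply: (betw_L5 irr tr Px Py Pa Pb Pg H1 _ H3); rewrite betwC.
  + have Py' := Dp_or HD HP Hy Py.
    have H1 : betw ltr ga (al - ga) (-(be - ga)).
      by apply: S => //; vec Ega; rewrite Ea Eb; lra.
    have H2 : betw ltr ga al (al - ga) by apply: S => //; rewrite addrC subrK.
    have H3 : betw ltr be ga (-(be - ga)) by apply: S => //; rewrite opprB addrC subrK.
    exact: (betw_L6 irr tr Px Py' Pa Pb Pg H1 H2 H3).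
  + have Px' := Dp_or HD HP Hx Px.
    have H1 : betw ltr ga (be - ga) (-(al - ga)).
      by apply: S => //; vec Ega; rewrite Ea Eb; lra.
    have H2 : betw ltr ga be (be - ga) by apply: S => //; rewrite addrC subrK.
    have H3 : betw ltr al ga (-(al - ga)) by apply: S => //; rewrite opprB addrC subrK.
    rewrite betwC; exact: (betw_L6 irr tr Py Px' Pb Pa Pg H1 H2 H3).
  + exfalso.
    have Px' := Dp_or HD HP Hx Px; have Py' := Dp_or HD HP Hy Py.
    have Es : - (al - ga) + - (be - ga) = - ga by vec Ega; rewrite Ea Eb; lra.
    have := Dp_add HP Px' Py'; rewrite Es => /(_ (root_opp HD Hg)).
    by rewrite (negbTE (DpN HP Pg)).
- (* gamma = alpha + 2 beta *)
  have vu : pairing ga al = 0 by rewrite Eu U.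
  have vw : pairing ga be = 2 by rewrite Ew W.
  have v1 : pairing al be = -2 by rewrite En1 N1 rmorphN.
  have v2 : pairing be al = -1 by rewrite En2 N2 rmorphN.
  have Eb : b = 2 by move: Hw'; rewrite vw v2; lra.
  have Ea : a = 1 by move: Hq; rewrite v1 v2 Eb; lra.
  have He : al + be \in D.
    by have := root_refl HD Ha Hb; rewrite v2 scaleN1r opprK addrC.
  have Pe := Dp_add HP Pa Pb He.
  have H1 : betw ltr al (al + be) be by apply: S.
  have H2 : betw ltr (al + be) ga be by apply: S => //; vec Ega; rewrite Ea Eb; lra.
  exact: (betw_LB irr tr Pa Pe Pg Pb H1 H2).
- (* gamma = alpha + 3 beta *)
  have vu : pairing ga al = -1 by rewrite Eu U rmorphN.
  have vw : pairing ga be = 3 by rewrite Ew W.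
  have v1 : pairing al be = -3 by rewrite En1 N1 rmorphN.
  have v2 : pairing be al = -1 by rewrite En2 N2 rmorphN.
  have Eb : b = 3 by move: Hw'; rewrite vw v2; lra.
  have Ea : a = 1 by move: Hu'; rewrite vu v1; lra.
  have He : al + be \in D.
    by have := root_refl HD Ha Hb; rewrite v2 scaleN1r opprK addrC.
  have Pe := Dp_add HP Pa Pb He.
  have v3 : pairing (al + be) be = -1 by rewrite pairingDl v1 P_bb; lra.
  have He2 : al + be + be \in D.
    by have := root_refl HD Hb He; rewrite v3 scaleN1r opprK.
  have Pe2 := Dp_add HP Pe Pb He2.
  have H1 : betw ltr al (al + be) be by apply: S.
  have H2 : betw ltr (al + be) (al + be + be) be by apply: S.
  have H3 : betw ltr (al + be + be) ga be by apply: S => //; vec Ega; rewrite Ea Eb; lra.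
  exact: (betw_LB irr tr Pa Pe2 Pg Pb (betw_LB irr tr Pa Pe Pe2 Pb H1 H2) H3).
Qed.

Lemma core (R : realFieldType) n (D : seq 'rV[R]_n) Dp ltr al be ga :
  is_irreducible_reduced_root_system D -> is_positive_system D Dp ->
  is_reflection_order Dp ltr -> Dp al -> Dp be -> Dp ga ->
  coroot al + coroot be = coroot ga -> betw ltr al ga be.
Proof.
move=> HD HP HO Pa Pb Pg E.
have [Hu|Hu] := lerP (pairing ga al) 1; first exact: (core_aux HD HP HO Pa Pb Pg E Hu).
rewrite betwC; apply: (core_aux HD HP HO Pb Pa Pg); first by rewrite addrC.
have Hg0 := root_neq0 HD (Dp_D HP Pg).
have Huw : pairing ga al + pairing ga be = 2.
  by rewrite /pairing -dotDr E; exact: pairing_self Hg0.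
have L : forall x y : R, 1 < x -> x + y = 2 -> y <= 1 by move=> x y; lra.
exact: L Hu Huw.
Qed.

Lemma betw_end1 (T : Type) (r : rel T) (P : pred T)
  (irr : forall a, P a -> ~~ r a a)
  (tr : forall a b c, P a -> P b -> P c -> r a b -> r b c -> r a c) a b c :
  P a -> P b -> P c -> betw r a b c -> r c a -> r b a && r c b.
Proof. move=> Pa Pb Pc; bsolve tr irr; by apply/andP. Qed.

Lemma betw_end2 (T : Type) (r : rel T) (P : pred T)
  (irr : forall a, P a -> ~~ r a a)
  (tr : forall a b c, P a -> P b -> P c -> r a b -> r b c -> r a c) a b c :
  P a -> P b -> P c -> betw r a b c -> r a c -> r a b && r b c.
Proof. move=> Pa Pb Pc; bsolve tr irr; by apply/andP. Qed.

Lemma pairingNr (R : realFieldType) n (x g : 'rV[R]_n) : pairing x (- g) = - pairing x g.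
Proof. by rewrite /pairing corootN dotNr. Qed.

Lemma RO_lt1 (R : realFieldType) n (Dp : pred 'rV[R]_n) lam ltr a b :
  in_RO Dp lam ltr -> Dp a -> Dp b -> pairing lam a < 0 -> 0 <= pairing lam b -> ltr a b.
Proof.
case=> _ H Pa Pb Ha Hb; have [H1 [_ H3]] := H a b Pa Pb.
move: Hb; rewrite le_eqVlt => /orP [/eqP Hb|Hb].
  by apply: H1; rewrite Ha -Hb eqxx.
by apply: H3; rewrite Ha Hb.
Qed.

Lemma RO_lt2 (R : realFieldType) n (Dp : pred 'rV[R]_n) lam ltr a b :
  in_RO Dp lam ltr -> Dp a -> Dp b -> pairing lam a <= 0 -> 0 < pairing lam b -> ltr a b.
Proof.
case=> _ H Pa Pb Ha Hb; have [_ [H2 H3]] := H a b Pa Pb.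
move: Ha; rewrite le_eqVlt => /orP [/eqP Ha|Ha].
  by apply: H2; rewrite Ha eqxx Hb.
by apply: H3; rewrite Ha Hb.
Qed.

Lemma prec_mixed (R : realFieldType) n (D : seq 'rV[R]_n) Dp lam ltr ga gb h :
  is_irreducible_reduced_root_system D -> is_positive_system D Dp -> in_RO Dp lam ltr ->
  ga \in D -> gb \in D -> h \in D ->
  0 < pairing lam ga -> 0 < pairing lam gb -> 0 < pairing lam h ->
  coroot ga + coroot gb = coroot h -> Dp ga -> ~~ Dp gb ->
  precI Dp ltr ga h && precI Dp ltr h gb.
Proof.
move=> HD HP HRO Ha Hb Hh pa pb ph E Pa Nb.
have HO := HRO.1; case: (HO) => irr tr _ _.
have Pb' := Dp_or HD HP Hb Nb.
case: (boolP (Dp h)) => Ph.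
- rewrite /precI Pa Ph (negbTE Nb) andbT.
  have E' : coroot h + coroot (- gb) = coroot ga by rewrite corootN -E addrK.
  have B := core HD HP HO Ph Pb' Pa E'.
  have L : ltr (- gb) h by apply: (RO_lt1 HRO) => //; rewrite ?pairingNr ?oppr_lt0 // ltW.
  by case/andP: (betw_end1 irr tr Ph Pa Pb' B L).
- have Ph' := Dp_or HD HP Hh Ph.
  rewrite /precI Pa (negbTE Ph) (negbTE Nb) /=.
  have E' : coroot (- h) + coroot ga = coroot (- gb).
    by rewrite !corootN -E opprD addrC addrA subrr add0r.
  have B := core HD HP HO Ph' Pa Pb' E'.
  have L : ltr (- h) ga by apply: (RO_lt1 HRO) => //; rewrite ?pairingNr ?oppr_lt0 // ltW.
  by case/andP: (betw_end2 irr tr Ph' Pb' Pa B L).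
Qed.

Lemma prec_betw (R : realFieldType) n (D : seq 'rV[R]_n) Dp lam ltr ga gb h :
  is_irreducible_reduced_root_system D -> is_positive_system D Dp -> in_RO Dp lam ltr ->
  ga \in D -> gb \in D -> h \in D ->
  0 < pairing lam ga -> 0 < pairing lam gb -> 0 < pairing lam h ->
  coroot ga + coroot gb = coroot h -> betw (precI Dp ltr) gb h ga.
Proof.
move=> HD HP HRO Ha Hb Hh pa pb ph E.
have HO := HRO.1.
case: (boolP (Dp ga)) => Pa; case: (boolP (Dp gb)) => Pb.
- have Ph := Dp_sum HD HP Hh E Pa Pb.
  rewrite /betw /precI Pa Pb Ph -/(betw ltr gb h ga) betwC.
  exact: core HD HP HO Pa Pb Ph E.
- by rewrite /betw (prec_mixed HD HP HRO Ha Hb Hh pa pb ph E Pa Pb) orbT.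
- have E' : coroot gb + coroot ga = coroot h by rewrite addrC.
  by rewrite /betw (prec_mixed HD HP HRO Hb Ha Hh pb pa ph E' Pb Pa).
- have Ph := nDp_sum HD HP Ha Hb Hh E Pa Pb.
  have E' : coroot (- ga) + coroot (- gb) = coroot (- h) by rewrite !corootN -opprD E.
  have B := core HD HP HO (Dp_or HD HP Ha Pa) (Dp_or HD HP Hb Pb) (Dp_or HD HP Hh Ph) E'.
  by rewrite /betw /precI (negbTE Pa) (negbTE Pb) (negbTE Ph) -/(betw ltr (- gb) (- h) (- ga)) betwC.
Qed.

Lemma prec2 (R : realFieldType) n (D : seq 'rV[R]_n) Dp lam ltr ga gb h :
  is_irreducible_reduced_root_system D -> is_positive_system D Dp -> in_RO Dp lam ltr ->
  ga \in D -> h \in D -> Dp gb ->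
  0 < pairing lam ga -> 0 < pairing lam h ->
  coroot ga + coroot gb = coroot h ->
  (Dp ga -> pairing lam gb <= 0) -> (~~ Dp ga -> 0 <= pairing lam gb) ->
  precI Dp ltr h ga.
Proof.
move=> HD HP HRO Ha Hh Pb pa ph E C1 C2.
have HO := HRO.1; case: (HO) => irr tr _ _.
case: (boolP (Dp ga)) => Pa.
- have Ph := Dp_sum HD HP Hh E Pa Pb.
  rewrite /precI Pa Ph.
  have B := core HD HP HO Pa Pb Ph E.
  have L : ltr gb ga by apply: (RO_lt2 HRO) => //; exact: C1.
  by case/andP: (betw_end1 irr tr Pa Ph Pb B L).
- case: (boolP (Dp h)) => Ph; first by rewrite /precI Ph (negbTE Pa).
  rewrite /precI (negbTE Pa) (negbTE Ph).
  have Ph' := Dp_or HD HP Hh Ph; have Pa' := Dp_or HD HP Ha Pa.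
  have E' : coroot (- h) + coroot gb = coroot (- ga).
    by rewrite !corootN -E opprD -addrA addNr addr0.
  have B := core HD HP HO Ph' Pb Pa' E'.
  have L : ltr (- h) gb by apply: (RO_lt1 HRO) => //; [rewrite pairingNr oppr_lt0 | exact: C2].
  by case/andP: (betw_end2 irr tr Ph' Pa' Pb B L).
Qed.

Definition rpos (R : realFieldType) n (Dp : pred 'rV[R]_n) (g : 'rV[R]_n) (r : R) : Prop :=
  0 < r \/ (r = 0 /\ Dp g).

Lemma rposP (R : realFieldType) n (Dp : pred 'rV[R]_n) g r :
  rpos Dp g r <-> (0 < r) || (r == 0) && Dp g.
Proof.
split; first by case=> [->//|[-> ->]]; rewrite eqxx orbT.
by case/orP=> [H|/andP[/eqP H1 H2]]; [left|right].
Qed.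

Lemma rpos_ge0 (R : realFieldType) n (Dp : pred 'rV[R]_n) g r :
  rpos Dp g r -> 0 <= r /\ (r = 0 -> Dp g).
Proof.
case=> [H|[-> H]]; last by split.
by split; [exact: ltW | move=> E; move: H; rewrite E ltxx].
Qed.

Lemma nrpos (R : realFieldType) n (Dp : pred 'rV[R]_n) g r :
  ~ rpos Dp g r -> r <= 0 /\ (r = 0 -> ~~ Dp g).
Proof.
move=> H; split.
  by rewrite leNgt; apply/negP => Hr; apply: H; left.
by move=> E; apply/negP => Pg; apply: H; right.
Qed.

Lemma mk_rpos (R : realFieldType) n (Dp : pred 'rV[R]_n) g r :
  0 <= r -> (r = 0 -> Dp g) -> rpos Dp g r.
Proof.
rewrite le_eqVlt => /orP [/eqP E|H] H2; last by left.
by right; split; [|apply: H2].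
Qed.

Lemma mk_nrpos (R : realFieldType) n (Dp : pred 'rV[R]_n) g r :
  r <= 0 -> (r = 0 -> ~~ Dp g) -> ~ rpos Dp g r.
Proof.
move=> H1 H2 [H|[E P]]; first by move: H1; rewrite leNgt H.
by move: (H2 E); rewrite P.
Qed.

Lemma pos_iff (R : realFieldType) n (D : seq 'rV[R]_n) Dp (x : acoroot R n) g :
  is_irreducible_reduced_root_system D -> g \in D -> x.1 = coroot g ->
  is_pos_acoroot D Dp x <-> rpos Dp g (x.2)%:~R.
Proof.
move=> HD Hg Ex; split.
  case=> g' Hg' [E' H]; have Eg : g' = g.
    by apply: coroot_inj; rewrite ?(root_neq0 HD) // -E'.
  subst g'; case: H => [H|[-> P]]; [left; rewrite ltr0z | right].
  by [].
  by [].
move=> H; exists g => //; split=> //.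
case: H => [H|[E P]]; [left; rewrite -(ltr0z R) | right; split=> //].
  by [].
by apply/eqP; rewrite -(intr_eq0 R) E.
Qed.

Lemma Inv_iff (R : realFieldType) n (D : seq 'rV[R]_n) Dp lam (x : acoroot R n) g :
  is_irreducible_reduced_root_system D -> g \in D -> x.1 = coroot g ->
  in_Inv D Dp lam x <->
  (rpos Dp g (x.2)%:~R /\ ~ rpos Dp g ((x.2)%:~R - pairing lam g)).
Proof.
move=> HD Hg Ex.
have Ep : dot lam x.1 = pairing lam g by rewrite Ex.
split.
  case=> Hp Hn; split; first by rewrite -(pos_iff Dp HD Hg Ex).
  move=> Hr; apply: Hn; exists g => //; split=> //.
  by rewrite Ep.
case=> Hp Hn; split; first by rewrite (pos_iff Dp HD Hg Ex).
case=> g' Hg' [E' H]; have Eg : g' = g.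
  by apply: coroot_inj; rewrite ?(root_neq0 HD) // -E'.
subst g'; apply: Hn; by rewrite -Ep.
Qed.

Lemma ltInv_iff (R : realFieldType) n Dp ltr lam (x y : acoroot R n) gx gy :
  gx != 0 -> gy != 0 -> x.1 = coroot gx -> y.1 = coroot gy ->
  ltInv Dp ltr lam x y <->
  ((x.2)%:~R / pairing lam gx < (y.2)%:~R / pairing lam gy \/
   ((x.2)%:~R / pairing lam gx = (y.2)%:~R / pairing lam gy /\ precI Dp ltr gy gx)).
Proof.
move=> Hx Hy Ex Ey.
have Ax : abar x = gx by rewrite /abar -/(coroot x.1) Ex corootK.
have Ay : abar y = gy by rewrite /abar -/(coroot y.1) Ey corootK.
by rewrite /ltInv /dInv Ax Ay Ex Ey.
Qed.

Lemma Inv_p_pos (R : realFieldType) n (Dp : pred 'rV[R]_n) g k p :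
  rpos Dp g k -> ~ rpos Dp g (k - p) -> 0 < p.
Proof.
move=> /rpos_ge0 [H1 H2] /nrpos [H3 H4].
have [Hp|Hp] := ltP 0 p; first by [].
have E : k - p = 0 by lra.
have E2 : k = 0 by lra.
by move: (H4 E); rewrite (H2 E2).
Qed.

Lemma frac_lt (R : realFieldType) (x y p q : R) :
  0 < p -> 0 < q -> (x / p < y / q) = (x * q < y * p).
Proof. by move=> Hp Hq; rewrite ltr_pdivrMr // mulrAC ltr_pdivlMr. Qed.

Lemma frac_eq (R : realFieldType) (x y p q : R) :
  0 < p -> 0 < q -> (x / p = y / q) <-> (x * q = y * p).
Proof.
move=> Hp Hq; split=> E.
  by move: E => /(congr1 (fun t => t * p * q)); rewrite mulfVK ?gt_eqF // -mulrA (mulrC p) mulrA mulfVK ?gt_eqF.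
have q0 : q != 0 by rewrite gt_eqF.
have p0 : p != 0 by rewrite gt_eqF.
apply: (mulIf q0); apply: (mulIf p0).
by rewrite mulfVK ?gt_eqF // -mulrA (mulrC q) mulrA mulfVK ?gt_eqF.
Qed.

Lemma mediant (R : realFieldType) (x y p q : R) : 0 < p -> 0 < q ->
  x / p < y / q -> x / p < (x + y) / (p + q) /\ (x + y) / (p + q) < y / q.
Proof.
move=> Hp Hq; have Hpq : 0 < p + q by rewrite addr_gt0.
rewrite !frac_lt // => H; split; nra.
Qed.

Lemma mediant_eq (R : realFieldType) (x y p q : R) : 0 < p -> 0 < q ->
  x / p = y / q -> (x + y) / (p + q) = x / p.
Proof.
move=> Hp Hq; have Hpq : 0 < p + q by rewrite addr_gt0.
rewrite !frac_eq // => H; nra.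
Qed.

Lemma arith2 (R : realFieldType) (pa pb ka kb : R) (da db : bool) :
  0 < pa -> 0 <= ka -> (ka = 0 -> da) -> ka - pa <= 0 -> (ka - pa = 0 -> ~~ da) ->
  0 <= kb -> (kb = 0 -> db) -> 0 <= kb - pb -> (kb - pb = 0 -> db) ->
  ka * pb <= kb * pa /\
  (ka * pb = kb * pa -> [/\ db, (da -> pb <= 0) & (~~ da -> 0 <= pb)]).
Proof.
move=> Hpa Hka Hka0 Hkpa Hkpa0 Hkb Hkb0 Hkpb Hkpb0.
have [Hpb|Hpb] := lerP pb 0.
- split; first nra.
  move=> E.
  have Ekb : kb = 0 by nra.
  split; [exact: Hkb0 | by [] | move=> Nda].
  have [Hpb'|Hpb'] := ltrP pb 0; last by [].
  have Eka : ka = 0 by nra.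
  by move: (Hka0 Eka); rewrite (negbTE Nda).
- split; first nra.
  move=> E.
  have Ekb : kb = pb by nra.
  have Eka : ka = pa by nra.
  have Nda : ~~ da by apply: Hkpa0; lra.
  split; [apply: Hkpb0; lra | by rewrite (negbTE Nda) | move=> _; exact: ltW].
Qed.

Lemma aaddC (R : realFieldType) n (a b : acoroot R n) : aadd a b = aadd b a.
Proof. by rewrite /aadd addrC [a.2 + _]addrC. Qed.

Lemma part1 (R : realFieldType) n (D : seq 'rV[R]_n) Dp lam ltr (a b : acoroot R n) :
  is_irreducible_reduced_root_system D -> is_positive_system D Dp -> in_RO Dp lam ltr ->
  in_Inv D Dp lam a -> in_Inv D Dp lam b -> is_pos_acoroot D Dp (aadd a b) ->
  in_Inv D Dp lam (aadd a b) /\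
  ((ltInv Dp ltr lam a (aadd a b) /\ ltInv Dp ltr lam (aadd a b) b) \/
   (ltInv Dp ltr lam b (aadd a b) /\ ltInv Dp ltr lam (aadd a b) a)).
Proof.
move=> HD HP HRO Ia Ib Pab.
have [[ga Hga [Ea _]] _] := Ia.
have [[gb Hgb [Eb _]] _] := Ib.
have [h Hh [Eh _]] := Pab.
have [Ka Na] := (Inv_iff Dp lam HD Hga Ea).1 Ia.
have [Kb Nb] := (Inv_iff Dp lam HD Hgb Eb).1 Ib.
have Kab := (pos_iff Dp HD Hh Eh).1 Pab.
have E : coroot ga + coroot gb = coroot h by rewrite -Ea -Eb; exact: Eh.
have k2 : ((aadd a b).2)%:~R = (a.2)%:~R + (b.2)%:~R :> R by rewrite /= intrD.
have Ep : pairing lam h = pairing lam ga + pairing lam gb by rewrite /pairing -E dotDr.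
have pa := Inv_p_pos Ka Na; have pb := Inv_p_pos Kb Nb.
have ph : 0 < pairing lam h by rewrite Ep addr_gt0.
have Hinv : in_Inv D Dp lam (aadd a b).
  apply/(Inv_iff Dp lam HD Hh Eh); split=> //.
  rewrite k2 Ep; have [Na1 Na2] := nrpos Na; have [Nb1 Nb2] := nrpos Nb.
  apply: mk_nrpos; first lra.
  move=> Z; have Za : (a.2)%:~R - pairing lam ga = 0 by lra.
  have Zb : (b.2)%:~R - pairing lam gb = 0 by lra.
  exact: nDp_sum HD HP Hga Hgb Hh E (Na2 Za) (Nb2 Zb).
split=> //.
have Ha0 := root_neq0 HD Hga; have Hb0 := root_neq0 HD Hgb; have Hh0 := root_neq0 HD Hh.
have L1 := ltInv_iff Dp ltr lam Ha0 Hh0 Ea Eh.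
have L2 := ltInv_iff Dp ltr lam Hh0 Hb0 Eh Eb.
have L3 := ltInv_iff Dp ltr lam Hb0 Hh0 Eb Eh.
have L4 := ltInv_iff Dp ltr lam Hh0 Ha0 Eh Ea.
rewrite k2 Ep in L1 L2 L3 L4.
case: (ltrgtP ((a.2)%:~R / pairing lam ga) ((b.2)%:~R / pairing lam gb)) => H.
- have [M1 M2] := mediant pa pb H.
  by left; split; [apply/L1; left | apply/L2; left].
- have [M1 M2] := mediant pb pa H.
  rewrite addrC [pairing lam gb + _]addrC in M1 M2.
  by right; split; [apply/L3; left | apply/L4; left].
- have M := mediant_eq pa pb H.
  case/orP: (prec_betw HD HP HRO Hga Hgb Hh pa pb ph E) => /andP [B1 B2].
  + left; split; [apply/L1; right | apply/L2; right]; split=> //.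
    by rewrite M H.
  + right; split; [apply/L3; right | apply/L4; right]; split=> //.
    by rewrite M H.
Qed.

Lemma rpos_dec (R : realFieldType) n (Dp : pred 'rV[R]_n) g r :
  rpos Dp g r \/ ~ rpos Dp g r.
Proof.
case: (boolP ((0 < r) || (r == 0) && Dp g)) => H; first by left; apply/rposP.
by right => /rposP; apply/negP.
Qed.

Lemma pos_sum (R : realFieldType) n (D : seq 'rV[R]_n) Dp ga gb h ra rb :
  is_irreducible_reduced_root_system D -> is_positive_system D Dp -> h \in D ->
  coroot ga + coroot gb = coroot h ->
  rpos Dp ga ra -> rpos Dp gb rb -> rpos Dp h (ra + rb).
Proof.
move=> HD HP Hh E /rpos_ge0 [A1 A2] /rpos_ge0 [B1 B2].
apply: mk_rpos; first lra.
move=> Z; have Za : ra = 0 by lra.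
have Zb : rb = 0 by lra.
exact: Dp_sum HD HP Hh E (A2 Za) (B2 Zb).
Qed.

Lemma part2_one (R : realFieldType) n (D : seq 'rV[R]_n) Dp lam ltr (a b : acoroot R n) :
  is_irreducible_reduced_root_system D -> is_positive_system D Dp -> in_RO Dp lam ltr ->
  is_pos_acoroot D Dp a -> is_pos_acoroot D Dp b -> in_Inv D Dp lam (aadd a b) ->
  in_Inv D Dp lam a -> ~ in_Inv D Dp lam b -> ltInv Dp ltr lam a (aadd a b).
Proof.
move=> HD HP HRO Pa Pb Iab Ia NIb.
have [ga Hga [Ea _]] := Pa.
have [gb Hgb [Eb _]] := Pb.
have [[h Hh [Eh _]] _] := Iab.
have [Ka Na] := (Inv_iff Dp lam HD Hga Ea).1 Ia.
have Kb := (pos_iff Dp HD Hgb Eb).1 Pb.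
have [Kab Nab] := (Inv_iff Dp lam HD Hh Eh).1 Iab.
have Rb : rpos Dp gb ((b.2)%:~R - pairing lam gb).
  case: (rpos_dec Dp gb ((b.2)%:~R - pairing lam gb)) => // Hn.
  by exfalso; apply: NIb; apply/(Inv_iff Dp lam HD Hgb Eb).
have E : coroot ga + coroot gb = coroot h by rewrite -Ea -Eb; exact: Eh.
have k2 : ((aadd a b).2)%:~R = (a.2)%:~R + (b.2)%:~R :> R by rewrite /= intrD.
have Ep : pairing lam h = pairing lam ga + pairing lam gb by rewrite /pairing -E dotDr.
have pa := Inv_p_pos Ka Na; have ph := Inv_p_pos Kab Nab.
have [A1 A2] := rpos_ge0 Ka; have [A3 A4] := nrpos Na.
have [B1 B2] := rpos_ge0 Kb; have [B3 B4] := rpos_ge0 Rb.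
have B3' : 0 <= (b.2)%:~R - pairing lam gb by [].
have [Hle Heq] := arith2 pa A1 A2 A3 A4 B1 B2 B3' B4.
have Ha0 := root_neq0 HD Hga; have Hh0 := root_neq0 HD Hh.
apply/(ltInv_iff Dp ltr lam Ha0 Hh0 Ea Eh).
have ph' := ph; rewrite Ep in ph'.
rewrite k2 Ep.
move: Hle; rewrite le_eqVlt => /orP [/eqP Heq'|Hlt].
- right; split.
    by apply/frac_eq => //; nra.
  have [db C1 C2] := Heq Heq'.
  exact: prec2 HD HP HRO Hga Hh db pa ph E C1 C2.
- by left; rewrite frac_lt //; nra.
Qed.

Lemma part2 (R : realFieldType) n (D : seq 'rV[R]_n) Dp lam ltr (a b : acoroot R n) :
  is_irreducible_reduced_root_system D -> is_positive_system D Dp -> in_RO Dp lam ltr ->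
  is_pos_acoroot D Dp a -> is_pos_acoroot D Dp b -> in_Inv D Dp lam (aadd a b) ->
  (in_Inv D Dp lam a /\ ltInv Dp ltr lam a (aadd a b)) \/
  (in_Inv D Dp lam b /\ ltInv Dp ltr lam b (aadd a b)).
Proof.
move=> HD HP HRO Pa Pb Iab.
have [ga Hga [Ea _]] := Pa.
have [gb Hgb [Eb _]] := Pb.
have [[h Hh [Eh _]] _] := Iab.
have Ka := (pos_iff Dp HD Hga Ea).1 Pa.
have Kb := (pos_iff Dp HD Hgb Eb).1 Pb.
case: (rpos_dec Dp ga ((a.2)%:~R - pairing lam ga)) => Ra;
case: (rpos_dec Dp gb ((b.2)%:~R - pairing lam gb)) => Rb.
- exfalso.
  have [_ Nab] := (Inv_iff Dp lam HD Hh Eh).1 Iab.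
  have E : coroot ga + coroot gb = coroot h by rewrite -Ea -Eb; exact: Eh.
  have k2 : ((aadd a b).2)%:~R = (a.2)%:~R + (b.2)%:~R :> R by rewrite /= intrD.
  have Ep : pairing lam h = pairing lam ga + pairing lam gb by rewrite /pairing -E dotDr.
  apply: Nab; rewrite k2 Ep.
  have -> : (a.2)%:~R + (b.2)%:~R - (pairing lam ga + pairing lam gb) =
            ((a.2)%:~R - pairing lam ga) + ((b.2)%:~R - pairing lam gb) :> R by ring.
  exact: pos_sum HD HP Hh E Ra Rb.
- have Ib : in_Inv D Dp lam b by apply/(Inv_iff Dp lam HD Hgb Eb).
  have NIa : ~ in_Inv D Dp lam a by move=> /(Inv_iff Dp lam HD Hga Ea) [].
  right; split=> //; rewrite aaddC; apply: part2_one HD HP HRO Pb Pa _ Ib NIa.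
  by rewrite aaddC.
- have Ia : in_Inv D Dp lam a by apply/(Inv_iff Dp lam HD Hga Ea).
  have NIb : ~ in_Inv D Dp lam b by move=> /(Inv_iff Dp lam HD Hgb Eb) [].
  by left; split=> //; apply: part2_one HD HP HRO Pa Pb Iab Ia NIb.
- have Ia : in_Inv D Dp lam a by apply/(Inv_iff Dp lam HD Hga Ea).
  have Ib : in_Inv D Dp lam b by apply/(Inv_iff Dp lam HD Hgb Eb).
  have Pab : is_pos_acoroot D Dp (aadd a b) by case: Iab.
  have [_ [[L _]|[L _]]] := part1 HD HP HRO Ia Ib Pab.
    by left.
  by right.
Qed.


Unset Implicit Arguments.

Theorem proposition3p11 (R : realFieldType) (n : nat) (D : seq 'rV[R]_n)
  (Dp : pred 'rV[R]_n) (lam : 'rV[R]_n) (ltr : rel 'rV[R]_n) :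
  is_irreducible_reduced_root_system D ->
  is_positive_system D Dp ->
  in_weight_lattice D lam ->
  in_RO Dp lam ltr ->
  (forall a b : acoroot R n,
     in_Inv D Dp lam a -> in_Inv D Dp lam b ->
     is_pos_acoroot D Dp (aadd a b) ->
     in_Inv D Dp lam (aadd a b) /\
     ((ltInv Dp ltr lam a (aadd a b) /\ ltInv Dp ltr lam (aadd a b) b) \/
      (ltInv Dp ltr lam b (aadd a b) /\ ltInv Dp ltr lam (aadd a b) a)))
  /\
  (forall a b : acoroot R n,
     is_pos_acoroot D Dp a -> is_pos_acoroot D Dp b ->
     in_Inv D Dp lam (aadd a b) ->
     (in_Inv D Dp lam a /\ ltInv Dp ltr lam a (aadd a b)) \/
     (in_Inv D Dp lam b /\ ltInv Dp ltr lam b (aadd a b))).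
Proof.
move=> HD HP _ HRO; split.
- by move=> a b; exact: part1.
- by move=> a b; exact: part2.
Qed.
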